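(* Let $\psi\in\mathbf{\Psi}_n$, and $\nu:=(\nu_1,\ldots,\nu_n)\in\mathbb{R}^n$ with $|\!|\!|\nu|\!|\!|_\psi=1$. Then $$\partial|\!|\!|\cdot|\!|\!|_{\psi}(\nu)=\big\{(\tau_1\gamma_1,\ldots,\tau_n\gamma_n)\in\mathbb{R}^n \mid \mu\in\partial\psi(t),\ \gamma_i:=\psi(t)+\langle \mu,\mathbf{e}_i-t\rangle\ge 0,\ \tau_i:={\rm sgn}(\nu_i)\ \text{if}\ \nu_i\ne 0\ \text{and}\ \tau_i\in\{-1,1\}\ \text{if}\ \nu_i=0\ (i=1,\ldots,n)\big\},$$ where $t:=\Big(\frac{|\nu_1|}{\sum_{i=1}^{n}|\nu_i|},\ldots,\frac{|\nu_n|}{\sum_{i=1}^{n}|\nu_i|}\Big)$.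
   Context: $\Omega_n:=\{t\in\mathbb{R}^n\mid t_i\ge0,\ \sum_i t_i=1\}$, $\Omega_n^\circ:=\{t\in\Omega_n\mid t_i<1\ \forall i\}$, $\mathbf{e}_i$ the standard unit vectors. $\mathbf{\Psi}_n$ is the class of convex continuous $\psi:\Omega_n\to\mathbb{R}$ with (B1) $\psi(\mathbf{e}_i)=1$ for all $i$ and (B2) $\psi(t)\ge(1-t_i)\psi\big(\frac{t_1}{1-t_i},\ldots,\frac{t_{i-1}}{1-t_i},0,\frac{t_{i+1}}{1-t_i},\ldots,\frac{t_n}{1-t_i}\big)$ for all $t\in\Omega_n^\circ$, $i=1,\ldots,n$. Here $|\!|\!|\cdot|\!|\!|_\psi$ is the norm on $\mathbb{R}^n$ given by $|\!|\!|\nu|\!|\!|_\psi:=\big(\sum_i|\nu_i|\big)\psi\big(\frac{|\nu_1|}{\sum_i|\nu_i|},\ldots,\frac{|\nu_n|}{\sum_i|\nu_i|}\big)$ for $\nu\ne0$ and $0$ at $0$. $\partial$ denotes the convex subdifferential (for $\psi$, the subdifferential of the convex function on $\Omega_n$); ${\rm sgn}$ is the sign function. *)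

(* Defs.v *)
From HB Require Import structures.
From mathcomp Require Import all_boot all_order all_algebra.
From mathcomp Require Import all_classical all_reals all_analysis.
Set Implicit Arguments. Unset Strict Implicit. Unset Printing Implicit Defensive.
Import Order.TTheory GRing.Theory Num.Theory.
Import numFieldNormedType.Exports.
Local Open Scope classical_set_scope.
Local Open Scope ring_scope.

Section Defs.
Variables (R : realType) (n : nat).

Definition simplex : set 'rV[R]_n :=
  [set t | (forall i, 0 <= t ord0 i) /\ \sum_i t ord0 i = 1].

Definition simplex_int : set 'rV[R]_n :=
  [set t | simplex t /\ (forall i, t ord0 i < 1)].

Definition unitv (i : 'I_n) : 'rV[R]_n := \row_j (i == j)%:R.

Definition dotv (u v : 'rV[R]_n) : R := \sum_i u ord0 i * v ord0 i.

Definition convex_on (D : set 'rV[R]_n) (f : 'rV[R]_n -> R) : Prop :=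
  forall s t (l : R), D s -> D t -> 0 <= l -> l <= 1 ->
    f (l *: s + (1 - l) *: t) <= l * f s + (1 - l) * f t.

Definition dropi (t : 'rV[R]_n) (i : 'I_n) : 'rV[R]_n :=
  \row_j (if j == i then 0 else t ord0 j / (1 - t ord0 i)).

(* the class Psi_n; psi only matters on Omega_n *)
Definition Psi (psi : 'rV[R]_n -> R) : Prop :=
  convex_on simplex psi /\
  {within simplex, continuous psi} /\
  (forall i, psi (unitv i) = 1) /\
  (forall t i, simplex_int t ->
     (1 - t ord0 i) * psi (dropi t i) <= psi t).

Definition l1 (v : 'rV[R]_n) : R := \sum_i `|v ord0 i|.

Definition absnormalize (v : 'rV[R]_n) : 'rV[R]_n :=
  \row_j (`|v ord0 j| / l1 v).

Definition psi_norm (psi : 'rV[R]_n -> R) (v : 'rV[R]_n) : R :=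
  if v == 0 then 0 else l1 v * psi (absnormalize v).

Definition subdiff (D : set 'rV[R]_n) (f : 'rV[R]_n -> R) (x : 'rV[R]_n)
  : set 'rV[R]_n :=
  [set xi | forall y, D y -> f x + dotv xi (y - x) <= f y].

End Defs.

(* Main.v *)
Require Import Defs.
From HB Require Import structures.
From mathcomp Require Import all_boot all_order all_algebra.
From mathcomp Require Import all_classical all_reals all_analysis.
From mathcomp Require Import ring lra.
Import Order.TTheory GRing.Theory Num.Theory.
Local Open Scope classical_set_scope.
Local Open Scope ring_scope.

Section Helpers.
Variables (R : realType) (n : nat).
Implicit Types (u v x y z : 'rV[R]_n).

Lemma dotvB x y z : dotv x (y - z) = dotv x y - dotv x z.
Proof.
rewrite /dotv -sumrB; apply: eq_bigr => i _; by rewrite !mxE mulrBr.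
Qed.

Lemma dotvZ x (a : R) y : dotv x (a *: y) = a * dotv x y.
Proof.
rewrite /dotv mulr_sumr; apply: eq_bigr => i _; rewrite !mxE; lra.
Qed.

Lemma dotv_unit x i : dotv x (@unitv R n i) = x ord0 i.
Proof.
rewrite /dotv (bigD1 i) //= big1 ?addr0 => [|j ji]; rewrite !mxE ?eqxx ?mulr1 //.
by rewrite eq_sym (negbTE ji) mulr0.
Qed.

Lemma dotv0 x : dotv x 0 = 0.
Proof. by rewrite /dotv big1 // => i _; rewrite mxE mulr0. Qed.

Lemma l1_ge0 v : 0 <= l1 v.
Proof. by apply: sumr_ge0 => i _. Qed.

Lemma l1_gt0 v : v != 0 -> 0 < l1 v.
Proof.
move=> v0; rewrite lt_def l1_ge0 andbT; apply: contra v0 => /eqP h.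
apply/eqP/rowP => i; rewrite mxE; apply/normr0_eq0.
by apply: (psumr_eq0P _ h) => // j _.
Qed.

Lemma absn_simplex v : v != 0 -> simplex (absnormalize v).
Proof.
move=> v0; have s0 := l1_gt0 v v0; split => [i|].
  by rewrite mxE divr_ge0 // ltW.
rewrite -[RHS](divff (lt0r_neq0 s0)) /l1 mulr_suml; apply: eq_bigr => i _.
by rewrite mxE.
Qed.

Lemma psi_norm_abs psi v y : (forall i, `|y ord0 i| = `|v ord0 i|) ->
  psi_norm psi y = psi_norm psi v.
Proof.
move=> h.
have e : (y == 0) = (v == 0).
  apply/idP/idP => /eqP/rowP H; apply/eqP/rowP => i; rewrite mxE;
  apply/normr0_eq0; move: (H i); rewrite !mxE => H'.
    by rewrite -h H' normr0.
  by rewrite h H' normr0.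
have el : l1 y = l1 v by apply: eq_bigr => i _; rewrite h.
rewrite /psi_norm e el; congr (if _ then _ else _ * psi _); apply/rowP => i.
by rewrite !mxE h el.
Qed.

Lemma psi_norm_scale psi v (a : R) : 0 < a ->
  psi_norm psi (a *: v) = a * psi_norm psi v.
Proof.
move=> a0; rewrite /psi_norm scaler_eq0 (negbTE (lt0r_neq0 a0)) /=.
case: (v == 0); first by rewrite mulr0.
have el : l1 (a *: v) = a * l1 v.
  rewrite /l1 mulr_sumr; apply: eq_bigr => i _.
  by rewrite mxE normrM gtr0_norm.
rewrite el -mulrA; congr (_ * (_ * psi _)); apply/rowP => i.
rewrite !mxE normrM gtr0_norm // el invfM mulrACA divff ?mul1r //.
exact: lt0r_neq0.
Qed.

Lemma psi_norm0 psi : psi_norm psi (0 : 'rV[R]_n) = 0.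
Proof. by rewrite /psi_norm eqxx. Qed.

End Helpers.
Arguments l1_gt0 {R n v}.
Arguments absn_simplex {R n v}.

Lemma sumg (R : realType) (n : nat) (mu v : 'rV[R]_n) (c : R) : v != 0 ->
  \sum_i (c + mu ord0 i) * `|v ord0 i| = l1 v * (c + dotv mu (absnormalize v)).
Proof.
move=> v0; have s0 := lt0r_neq0 (l1_gt0 v0).
rewrite mulrDr; under eq_bigr do rewrite mulrDl.
rewrite big_split /= -mulr_sumr mulrC; congr (_ + _).
rewrite /dotv mulr_sumr; apply: eq_bigr => i _; rewrite mxE.
by field.
Qed.

Theorem lemma4p1 (R : realType) (n : nat) (psi : 'rV[R]_n -> R)
    (nu : 'rV[R]_n) :
  Psi psi -> psi_norm psi nu = 1 ->
  let t := absnormalize nu in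
  subdiff setT (psi_norm psi) nu =
  [set xi | exists mu tau : 'rV[R]_n,
     subdiff (@simplex R n) psi t mu /\
     (forall i, 0 <= psi t + dotv mu (@unitv R n i - t)) /\
     (forall i, nu ord0 i != 0 -> tau ord0 i = Num.sg (nu ord0 i)) /\
     (forall i, nu ord0 i = 0 -> tau ord0 i = 1 \/ tau ord0 i = -1) /\
     xi = \row_i (tau ord0 i * (psi t + dotv mu (@unitv R n i - t)))].
Proof.
move=> HPsi Hn t.
have nu0 : nu != 0.
  by apply/negP => /eqP e; move: Hn; rewrite e psi_norm0 => /eqP; rewrite eq_sym oner_eq0.
have s0 := l1_gt0 nu0.
have Hpt : l1 nu * psi t = 1 by move: Hn; rewrite /psi_norm (negbTE nu0).
have dmu_unit : forall (mu : 'rV[R]_n) i,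
    dotv mu (@unitv R n i - t) = mu ord0 i - dotv mu t.
  by move=> mu i; rewrite dotvB dotv_unit.
apply/seteqP; split => xi /=.
- move=> H.
  have H1 : forall y, 1 + dotv xi y - dotv xi nu <= psi_norm psi y.
    by move=> y; move: (H y I); rewrite Hn dotvB addrA.
  have dn : dotv xi nu = 1.
    move: (H1 0) (H1 (2 *: nu)); rewrite dotv0 psi_norm0 dotvZ psi_norm_scale //.
    rewrite Hn; lra.
  have Hle : forall y, dotv xi y <= psi_norm psi y.
    by move=> y; move: (H1 y); rewrite dn; lra.
  have Hsg : forall i, 0 <= xi ord0 i * nu ord0 i.
    move=> i; have := Hle (nu - (2 * nu ord0 i) *: @unitv R n i).
    rewrite dotvB dotvZ dotv_unit dn (@psi_norm_abs _ _ _ nu) ?Hn; first by lra.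
    move=> j; rewrite !mxE; case: (eqVneq i j) => [->|ij]; last by rewrite mulr0 subr0.
    by rewrite mulr1 (_ : _ - _ = - nu ord0 j) ?normrN //; lra.
  set mu := \row_i `|xi ord0 i|.
  have dmt : dotv mu t = psi t.
    apply: (mulfI (lt0r_neq0 s0)); rewrite Hpt -dn /dotv mulr_sumr.
    apply: eq_bigr => i _; rewrite !mxE -[RHS]ger0_norm ?Hsg // normrM.
    by field; rewrite lt0r_neq0.
  have gam : forall i, psi t + dotv mu (@unitv R n i - t) = `|xi ord0 i|.
    by move=> i; rewrite dmu_unit dmt mxE addrC subrK.
  exists mu, (\row_i (if nu ord0 i != 0 then Num.sg (nu ord0 i)
                      else if 0 <= xi ord0 i then 1 else -1)).
  split.
    move=> y [y0 ys]; rewrite dotvB dmt addrC subrK.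
    set z := \row_j (if 0 <= xi ord0 j then y ord0 j else - y ord0 j).
    have e1 : dotv xi z = dotv mu y.
      apply: eq_bigr => j _; rewrite !mxE; case: ifP => hx.
        by rewrite ger0_norm.
      by rewrite ltr0_norm ?mulrN ?mulNr // ltNge hx.
    have yn0 : y != 0.
      apply/negP => /eqP ey; move: ys; rewrite ey big1 => [/eqP|j _]; last by rewrite mxE.
      by rewrite eq_sym oner_eq0.
    have ly : l1 y = 1 by rewrite -ys; apply: eq_bigr => j _; rewrite ger0_norm.
    have e2 : psi_norm psi z = psi y.
      rewrite (@psi_norm_abs _ _ _ y); last first.
        by move=> j; rewrite mxE; case: ifP; rewrite ?normrN.
      rewrite /psi_norm (negbTE yn0) ly mul1r; congr psi; apply/rowP => j.
      by rewrite mxE ly divr1 ger0_norm.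
    by rewrite -e1 -e2.
  split; first by move=> i; rewrite gam.
  split; first by move=> i h; rewrite mxE h.
  split; first by move=> i h; rewrite mxE h eqxx /=; case: ifP; auto.
  apply/rowP => i; rewrite !mxE gam.
  case: (eqVneq (nu ord0 i) 0) => h /=.
    case: ifP => hx; first by rewrite mul1r ger0_norm.
    by rewrite ltr0_norm ?mulN1r ?opprK // ltNge hx.
  have := Hsg i.
  case: (ltrgtP (nu ord0 i) 0) => hn; last by move: h; rewrite hn eqxx.
    move=> hs; rewrite ltr0_sg // ler0_norm ?mulN1r ?opprK //; nra.
  move=> hs; rewrite gtr0_sg // ger0_norm ?mul1r //; nra.
- case=> mu [tau [Hmu [Hg [Ht1 [Ht2 ->]]]]] y _.
  set c := psi t - dotv mu t.
  have gE : forall i, psi t + dotv mu (@unitv R n i - t) = c + mu ord0 i.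
    by move=> i; rewrite dmu_unit /c; lra.
  have Hnu : dotv (\row_i (tau ord0 i * (psi t + dotv mu (@unitv R n i - t)))) nu = 1.
    transitivity (\sum_i (c + mu ord0 i) * `|nu ord0 i|); last first.
      by rewrite sumg // -Hpt; congr (_ * _); rewrite /c /t; lra.
    apply: eq_bigr => i _; rewrite mxE gE.
    case: (eqVneq (nu ord0 i) 0) => h; first by rewrite h normr0 !mulr0.
    rewrite Ht1 //; case: (ltrgtP (nu ord0 i) 0) => hn; last by move: h; rewrite hn eqxx.
      by rewrite ltr0_sg // ltr0_norm //; lra.
    by rewrite gtr0_sg // gtr0_norm //; lra.
  have Hy : dotv (\row_i (tau ord0 i * (psi t + dotv mu (@unitv R n i - t)))) y
      <= \sum_i (c + mu ord0 i) * `|y ord0 i|.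
    apply: ler_sum => i _; rewrite mxE -gE.
    have tn : `|tau ord0 i| = 1.
      case: (eqVneq (nu ord0 i) 0) => h.
        by case: (Ht2 i h) => ->; rewrite ?normrN normr1.
      by rewrite Ht1 // normr_sg h.
    apply: le_trans (ler_norm _) _.
    by rewrite !normrM tn mul1r (ger0_norm (Hg i)).
  have Hy2 : \sum_i (c + mu ord0 i) * `|y ord0 i| <= psi_norm psi y.
    case: (eqVneq y 0) => [->|y0].
      by rewrite psi_norm0 big1 // => i _; rewrite mxE normr0 mulr0.
    rewrite sumg // /psi_norm (negbTE y0); apply: ler_wpM2l; first exact: l1_ge0.
    have := Hmu _ (absn_simplex y0); rewrite dotvB /c; lra.
  rewrite Hn dotvB Hnu; lra.
Qed.
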